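(* Let $(M,\Sigma)$ be a measurable space, $r\ge1$, and $\mu_1,\dots,\mu_r$ non-atomic countably additive finite (nonnegative) measures on $\Sigma$. Then for every measurable set $S$ and every index $k\in\{1,\dots,r\}$ there is a measurable subset $H\subseteq S$ with $\mu_k(H)\ge 2^{-(r-1)}\mu_k(S)$ on which there exists a strong solution, i.e. a partition $H=F_1\sqcup\dots\sqcup F_r$ into measurable sets with $\mu_i(F_i)\ge\mu_i(F_j)$ for all $i,j$.
   Context: Partition elements may be empty. A measure is non-atomic if every measurable set of positive measure contains a measurable subset of strictly smaller positive measure. *)

(* Defs.v *)
From HB Require Import structures.
From mathcomp Require Import all_boot all_order all_algebra.
From mathcomp Require Import all_classical all_reals all_analysis.
Set Implicit Arguments. Unset Strict Implicit. Unset Printing Implicit Defensive.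
Import Order.TTheory GRing.Theory Num.Theory.
Local Open Scope classical_set_scope.
Local Open Scope ring_scope.
Local Open Scope ereal_scope.

Definition non_atomic d (T : measurableType d) (R : realType)
  (mu : set T -> \bar R) : Prop :=
  forall A : set T, measurable A -> 0 < mu A ->
    exists B : set T, [/\ measurable B, B `<=` A, 0 < mu B & mu B < mu A].

Definition strong_solution d (T : measurableType d) (R : realType) (r : nat)
  (mu : 'I_r -> set T -> \bar R) (H : set T) : Prop :=
  exists F : 'I_r -> set T,
    [/\ (forall i, measurable (F i)),
        H = \bigcup_(i in [set: 'I_r]) F i,
        trivIset [set: 'I_r] F &
        forall i j, mu i (F j) <= mu i (F i)].

(* Main.v *)
Require Import Defs.
From HB Require Import structures.
From mathcomp Require Import all_boot all_order all_algebra.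
From mathcomp Require Import all_classical all_reals all_analysis.
From mathcomp Require Import lra zify.
Import Order.TTheory GRing.Theory Num.Theory.
Local Open Scope classical_set_scope.
Local Open Scope ring_scope.
Set Implicit Arguments. Unset Strict Implicit. Unset Printing Implicit Defensive.
Section basics.
Context d (T : measurableType d) (R : realType).
Variable mu : {finite_measure set T -> \bar R}.

Definition mr (A : set T) : R := fine (mu A).

Lemma muE A : measurable A -> mu A = (mr A)%:E.
Proof. by move=> mA; rewrite /mr fineK //; exact: fin_num_measure. Qed.

Lemma mr_ge0 A : 0 <= mr A.
Proof. by rewrite /mr fine_ge0 // measure_ge0. Qed.

Lemma mr0 : mr set0 = 0.
Proof. by rewrite /mr measure0. Qed.

Lemma mrU A B : measurable A -> measurable B -> A `&` B = set0 ->
  mr (A `|` B) = mr A + mr B.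
Proof.
move=> mA mB AB; apply/EFin_inj; rewrite -muE; last exact: measurableU.
by rewrite measureU // EFinD -!muE.
Qed.

Lemma mr_le A B : measurable A -> measurable B -> A `<=` B -> mr A <= mr B.
Proof.
move=> mA mB AB; rewrite -lee_fin -!muE //.
by apply: le_measure => //; rewrite inE.
Qed.

Lemma mrD A B : measurable A -> measurable B -> B `<=` A ->
  mr (A `\` B) = mr A - mr B.
Proof.
move=> mA mB BA; have -> : mr A = mr (A `\` B) + mr B.
  rewrite -mrU //; first by rewrite setUC setDUK.
  - exact: measurableD.
  - by rewrite setDE -setIA setICl setI0.
by rewrite addrK.
Qed.
End basics.
Section sierp.
Context d (T : measurableType d) (R : realType).
Variable mu : {finite_measure set T -> \bar R}.
Hypothesis hna : non_atomic mu.
Local Notation mr := (mr mu).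

Lemma hna' C : measurable C -> 0 < mr C ->
  exists B, [/\ measurable B, B `<=` C, 0 < mr B & mr B < mr C].
Proof.
move=> mC C0.
have C0' : (0 < mu C)%E by rewrite (muE mu mC) lte_fin.
have [B [mB BC B0 BltC]] := hna mC C0'.
exists B; split => //.
  have : (0 < mu B)%E := B0.
  by rewrite (muE mu mB) lte_fin.
have : (mu B < mu C)%E := BltC.
by rewrite (muE mu mB) (muE mu mC) lte_fin.
Qed.

Lemma halve_small A : measurable A -> 0 < mr A -> forall n : nat,
  exists C, [/\ measurable C, C `<=` A, 0 < mr C & mr C * 2 ^+ n <= mr A].
Proof.
move=> mA A0; elim=> [|n [C [mC CA C0 Cn]]].
  by exists A; split => //; rewrite expr0 mulr1.
have [B [mB BC B0 BltC]] := hna' mC C0.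
have mCB : measurable (C `\` B) by exact: measurableD.
have hCB := mrD mu mC mB BC.
have sub1 : B `<=` A by move=> x /BC /CA.
have sub2 : C `\` B `<=` A by move=> x [/CA].
rewrite exprS.
have [hle|hgt] := leP (mr B * 2) (mr C).
  exists B; split => //.
  by apply: le_trans Cn; rewrite mulrA; apply: ler_wpM2r => //.
exists (C `\` B); split => //; first by rewrite hCB subr_gt0.
apply: le_trans Cn; rewrite mulrA; apply: ler_wpM2r.
  exact: exprn_ge0.
rewrite hCB; lra.
Qed.

Lemma small_sub A eps : measurable A -> 0 < mr A -> 0 < eps ->
  exists C, [/\ measurable C, C `<=` A, 0 < mr C & mr C < eps].
Proof.
move=> mA A0 e0.
have hb := @archi_boundP R (mr A / eps) (divr_ge0 (mr_ge0 _ _) (ltW e0)).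
set n := Num.bound _ in hb.
have [C [mC CA C0 Cn]] := halve_small mA A0 n.
exists C; split => //.
have h2 : (n%:R : R) <= 2 ^+ n.
  by rewrite -natrX ler_nat ltnW // ltn_expl.
have : mr C * n%:R < eps * n%:R.
  apply: (le_lt_trans (y := mr A)).
    by apply: le_trans Cn; rewrite ler_wpM2l // mr_ge0.
  by rewrite -ltr_pdivrMl // mulrC.
by rewrite ltr_pM2r //; apply: le_lt_trans hb; rewrite divr_ge0 ?mr_ge0 ?ltW.
Qed.

Lemma sierpinski A t : measurable A -> 0 <= t -> t <= mr A ->
  exists B, [/\ measurable B, B `<=` A & mr B = t].
Proof.
move=> mA t0 tA.
pose good B := [/\ measurable B, B `<=` A & mr B <= t].
pose adm B C := [/\ measurable C, C `<=` A `\` B & mr B + mr C <= t].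
pose E B := mr @` (adm B).
have hsup B : good B -> has_sup (E B).
  case=> mB BA Bt; split.
    exists (mr set0), set0 => //.
    split; [exact: measurable0 | by move=> x | by rewrite mr0 addr0].
  exists (mr A) => _ [C [mC CAB _] <-].
  by apply: mr_le => // x /CAB [].
have step B : exists C, good B -> adm B C /\ sup (E B) <= 2 * mr C.
  have [gB|ngB] := pselect (good B); last by exists set0.
  have [s0|s0] := leP (sup (E B)) 0.
    exists set0 => _; split; last by rewrite mr0 mulr0.
    split; [exact: measurable0 | by move=> x | ].
    by case: gB => _ _; rewrite mr0 addr0.
  have [_ [C aC <-] hC] := sup_adherent (eps := sup (E B) / 2)
    (divr_gt0 s0 (ltr0Sn R 1)) (hsup B gB).
  by exists C => _; split => //; lra.
have [f hf] := choice step.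
pose Bn n := iter n (fun B => B `|` f B) set0.
have BnS n : Bn n.+1 = Bn n `|` f (Bn n) by [].
have gBn n : good (Bn n).
  elim: n => [|n [mB BA Bt]]; first by split; [exact: measurable0 | by move=> x | rewrite /= mr0].
  have [[mC CAB Ct] _] := hf _ (And3 mB BA Bt).
  rewrite BnS; split.
  - exact: measurableU.
  - by move=> x [/BA|/CAB []].
  - rewrite mrU // -subset0 => x [/= xB /CAB [_]]; exact.
have mrS n : mr (Bn n.+1) = mr (Bn n) + mr (f (Bn n)).
  have [mB BA Bt] := gBn n.
  have [[mC CAB Ct] _] := hf _ (gBn n).
  rewrite BnS mrU // -subset0 => x [/= xB /CAB [_]]; exact.
pose Binf := \bigcup_n Bn n.
have mBn n : measurable (Bn n) by case: (gBn n).
have mBinf : measurable Binf by exact: bigcupT_measurable.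
have BinfA : Binf `<=` A by move=> x [n _]; case: (gBn n) => _ + _; apply.
have ndB : nondecreasing_seq Bn.
  apply/nondecreasing_seqP => n; apply/subsetPset; rewrite BnS; exact: subsetUl.
have Binft : mr Binf <= t.
  have h := nondecreasing_cvg_mu (mu := mu) mBn mBinf ndB.
  rewrite -lee_fin -(muE mu mBinf); apply: (cvge_to_le h).
  apply: nearW => n /=; rewrite (muE mu (mBn n)) lee_fin.
  by case: (gBn n).
exists Binf; split => //.
apply/eqP; rewrite eq_le Binft /=; rewrite leNgt; apply/negP => Blt.
have mAB : measurable (A `\` Binf) by exact: measurableD.
have AB0 : 0 < mr (A `\` Binf) by rewrite mrD //; lra.
have e0 : 0 < t - mr Binf by lra.
have [D [mD DAB D0 Dlt]] := small_sub mAB AB0 e0.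
have hD n : mr D <= 2 * mr (f (Bn n)).
  have [_ hs] := hf _ (gBn n); apply: le_trans hs.
  have [_ ub] := hsup _ (gBn n).
  apply: sup_upper_bound (hsup _ (gBn n)) _ _.
  exists D => //; split => //.
    by move=> x /DAB [xA nxB]; split => // xB; apply: nxB; exists n.
  have : mr (Bn n) <= mr Binf by apply: mr_le => // x xB; exists n.
  lra.
have lin n : n%:R * mr D <= 2 * mr (Bn n).
  elim: n => [|n IH]; first by rewrite mul0r mr0 mulr0.
  by rewrite mrS -[n.+1]addn1 natrD mulrDl mul1r mulrDr; have := hD n; lra.
have hb := @archi_boundP R (2 * t / mr D) (divr_ge0 (mulr_ge0 (ler0n R 2) t0) (ltW D0)).
set m := Num.bound _ in hb.
have := lin m; have [_ _ Bmt] := gBn m.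
move: hb; rewrite ltr_pdivrMr // => hb; lra.
Qed.

Lemma equal_parts (L : nat) : forall A c, measurable A -> 0 <= c ->
  L%:R * c <= mr A ->
  exists Q : nat -> set T, [/\ forall b, measurable (Q b),
     forall b, Q b `<=` A,
     forall b, (b < L)%N -> mr (Q b) = c &
     forall b b', b != b' -> Q b `&` Q b' = set0].
Proof.
elim: L => [|L IH] A c mA c0 hL.
  exists (fun _ => set0); split => //; first by move=> b x.
  by move=> b b' _; rewrite setI0.
have hLc : 0 <= L%:R * c by apply: mulr_ge0 => //; exact: ler0n.
move: hL; rewrite -addn1 natrD mulrDl mul1r => hL.
have cA : c <= mr A by lra.
have [Q0 [mQ0 Q0A hQ0]] := sierpinski mA c0 cA.
have mA' : measurable (A `\` Q0) by exact: measurableD.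
have [|Q' [mQ' Q'A hQ' dQ']] := IH (A `\` Q0) c mA' c0.
  by rewrite mrD // hQ0; lra.
exists (fun b => if b is b'.+1 then Q' b' else Q0); split.
- by case.
- by case => [|b] /=; [exact: Q0A | move=> x /Q'A []].
- by case => [|b] /= hb; [exact: hQ0 | apply: hQ'; move: hb; rewrite addn1 ltnS].
- case => [|b] [|b'] //= hbb.
  + by rewrite -subset0 => x [xQ0 /Q'A [_]]; apply.
  + by rewrite -subset0 => x [/Q'A [_ +] xQ0]; apply.
  + by apply: dQ'.
Qed.
End sierp.
Section threshold.
Context (R : realType) (I : finType) (w : I -> R) (w0 : forall b, 0 <= w b).
Local Open Scope set_scope.

Lemma threshold m : (0 < m)%N -> (m <= #|I|)%N ->
  exists v, [/\ 0 <= v, (#|[set b | (v < w b)%R]| < m)%N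
                 & (m <= #|[set b | (v <= w b)%R]|)%N].
Proof.
elim: m => [//|m IH] _ hmI.
have [m0|mpos] := posnP m.
  subst m.
  have [i0 _] : exists i0 : I, i0 \in I by apply/card_gt0P.
  case: (@arg_maxP _ _ I i0 xpredT w isT) => b _ hb.
  exists (w b); split => //.
    case: (posnP #|[set b0 | w b < w b0]|) => [->//|/card_gt0P [c]].
    by rewrite inE => hc; have := hb c isT; move=> /= /(lt_le_trans hc); rewrite ltxx.
  by apply/card_gt0P; exists b; rewrite inE.
have [v [v0 hlt hge]] := IH mpos (ltnW hmI).
have [hge'|hge'] := leqP m.+1 #|[set b | v <= w b]|.
  by exists v; split => //; apply: ltn_trans hlt _.
have hm : #|[set b | v <= w b]| = m by apply/eqP; rewrite eqn_leq hge -ltnS hge'.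
have : ~~ ([set: I] \subset [set b | v <= w b]).
  apply/negP => /subset_leq_card; rewrite cardsT hm => h.
  by move: hmI; rewrite ltnNge h.
case/subsetPn => c _; rewrite inE -ltNge => hc.
case: (@arg_maxP _ _ I c (fun b => w b < v) w hc) => b hbv hb.
exists (w b); split => //.
  have -> : [set b0 | w b < w b0] = [set b | v <= w b].
    apply/setP => b0; rewrite !inE.
    have [hv|hv] := leP v (w b0); first by rewrite (lt_le_trans hbv hv).
    by apply/negbTE; rewrite -leNgt; apply: (hb b0).
  by rewrite hm.
have sub : b |: [set b | v <= w b] \subset [set b0 | w b <= w b0].
  apply/fintype.subsetP => x; rewrite !inE => /orP [/eqP ->//|hx].
  exact: le_trans (ltW hbv) hx.
apply: leq_trans (subset_leq_card sub).
rewrite cardsU1 hm inE -ltNge hbv.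
by [].
Qed.
End threshold.
Section division.
Context d (T : measurableType d) (R : realType) (r : nat).
Variable mu : 'I_r -> {finite_measure set T -> \bar R}.
Hypothesis hna : forall i, non_atomic (mu i).
Variable L : nat.

Lemma Gdiv (s : seq 'I_r) : uniq s -> forall Q : 'I_L -> set T,
  (forall b, measurable (Q b)) -> (2 ^ size s <= L)%N ->
  exists (Tt : {set 'I_L}) (pi : 'I_r -> 'I_L) (X : 'I_r -> set T),
  [/\ (#|Tt| < 2 ^ size s)%N,
     forall i, i \in s -> [/\ pi i \in Tt, measurable (X i) & X i `<=` Q (pi i)],
     forall i j, i \in s -> j \in s -> pi i = pi j -> i = j,
     forall i j, i \in s -> j \in s -> mr (mu i) (X j) <= mr (mu i) (X i) &
     forall i b, i \in s -> b \notin Tt -> mr (mu i) (Q b) <= mr (mu i) (X i)].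
Proof.
elim: s => [|a s IH] us Q mQ hL.
  exists finset.set0, (fun _ => @Ordinal L 0 hL), (fun _ => set0).
  by split => //; rewrite cards0.
move: us => /= /andP [as_ us].
pose m := (2 ^ size s)%N.
have m0 : (0 < m)%N by rewrite expn_gt0.
have mL : (m <= #|'I_L|)%N.
  rewrite card_ord; apply: leq_trans hL.
  by rewrite /m expnS leq_pmull.
pose w b := mr (mu a) (Q b).
have [vv [vv0 hlt hge]] := threshold (w := w) (fun b => mr_ge0 (mu a) (Q b)) m0 mL.
have tr b : exists C, [/\ measurable C, C `<=` Q b,
    (vv < w b -> mr (mu a) C = vv) & (~~ (vv < w b) -> C = Q b)].
  have [h|h] := ltP vv (w b).
    have [C [mC CQ hC]] := sierpinski (@hna a) (mQ b) vv0 (ltW h).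
    by exists C; split.
  by exists (Q b); split => //; rewrite ltNge h.
have [Q' hQ'] := choice tr.
have mQ' b : measurable (Q' b) by case: (hQ' b).
have Q'Q b : Q' b `<=` Q b by case: (hQ' b).
have Q'le b : mr (mu a) (Q' b) <= vv.
  case: (hQ' b) => _ _ h1 h2; have [h|h] := ltP vv (w b).
    by rewrite h1.
  by rewrite h2 ?ltNge ?h.
have Q'eq b : vv <= w b -> mr (mu a) (Q' b) = vv.
  case: (hQ' b) => _ _ h1 h2; have [h|h] := ltP vv (w b) => hb.
    by rewrite h1.
  rewrite h2 ?ltNge ?h //; apply/eqP; rewrite eq_le h hb.
  by [].
have Q'id b : ~~ (vv < w b) -> Q' b = Q b by case: (hQ' b).
have hL' : (2 ^ size s <= L)%N by apply: leq_trans hL; rewrite expnS leq_pmull.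
have [Tt' [pi' [X' [cT' hX' inj' ef' fr']]]] := IH us Q' mQ' hL'.
have : ~~ ([set b | (vv <= w b)%R]%SET \subset Tt').
  by apply/negP => /subset_leq_card h; move: (leq_ltn_trans hge (leq_ltn_trans h cT')); rewrite ltnn.
case/subsetPn => t; rewrite inE => ht tT'.
exists (Tt' :|: [set b | (vv < w b)%R]%SET :|: [set t]),
  (fun i => if i == a then t else pi' i),
  (fun i => if i == a then Q' t else X' i).
split.
- have c1 := (leq_card_setU (Tt' :|: [set b | (vv < w b)%R]%SET) [set t]).1.
  have c2 := (leq_card_setU Tt' [set b | (vv < w b)%R]%SET).1.
  rewrite cards1 in c1.
  have hlt2 : (#|[set b | (vv < w b)%R]%SET| < m)%N := hlt.
  rewrite /m in hlt2; rewrite /= expnS.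
  move: c1 c2 hlt2 cT'; move: (2 ^ size s)%N => M c1 c2 hlt2 cT'.
  have h : (#|Tt'| + #|[set b | (vv < w b)%R]%SET| + 1 < 2 * M)%N.
    move: hlt2 cT'; move: #|Tt'| #|[set b | (vv < w b)%R]%SET| => x y; lia.
  exact: leq_ltn_trans c1 (leq_ltn_trans (leq_add c2 (leqnn 1)) h).
- move=> i; rewrite inE => /orP [/eqP ->|iS].
    by rewrite eqxx; split => //; rewrite !inE eqxx orbT.
  have ia : i != a by apply: contraNneq as_ => <-.
  rewrite (negbTE ia); case: (hX' i iS) => h1 h2 h3; split => //.
    by rewrite !inE h1.
  by move=> x /h3 /Q'Q.
- move=> i j; rewrite !inE.
  have [->|ia] := eqVneq i a; have [->|ja] := eqVneq j a => //= hi hj.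
  + by move=> tp; move: tT'; rewrite tp; case: (hX' j hj) => ->.
  + by move=> tp; move: tT'; rewrite -tp; case: (hX' i hi) => ->.
  + exact: inj'.
- move=> i j; rewrite !inE.
  have [->|ia] := eqVneq i a; have [->|ja] := eqVneq j a => //= hi hj.
  + rewrite Q'eq //; case: (hX' j hj) => _ mX XQ.
    by apply: le_trans (Q'le (pi' j)); apply: mr_le.
  + exact: fr'.
  + exact: ef'.
- move=> i b hi; rewrite !inE !negb_or => /andP [/andP [bT nlt] bt].
  have [->|ia] := eqVneq i a.
    by rewrite ?eqxx Q'eq // leNgt; exact: nlt.
  rewrite -(Q'id _ nlt); apply: fr' => //.
  by move: hi; rewrite inE (negbTE ia).
Qed.
End division.

Unset Implicit Arguments. Set Strict Implicit.
Local Open Scope ereal_scope.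

Theorem lemma3 (d : measure_display) (T : measurableType d) (R : realType)
  (r : nat) (hr : (1 <= r)%N)
  (mu : 'I_r -> {finite_measure set T -> \bar R})
  (hna : forall i, non_atomic (mu i))
  (S : set T) (mS : measurable S) (k : 'I_r) :
  exists H : set T,
    [/\ measurable H, H `<=` S,
        (((2 : R) ^- (r - 1)%N)%:E * mu k S <= mu k H) &
        strong_solution (fun i => (mu i : set T -> \bar R)) H].
Proof.
pose n := (r - 1)%N.
pose L := (2 ^ n)%N.
pose s := enum [set~ k]%SET.
have size_s : size s = n.
  by rewrite /s -cardE cardsC1 card_ord /n subn1.
have us : uniq s by exact: enum_uniq.
have ins i : (i \in s) = (i != k) by rewrite /s mem_enum !inE.
have L0 : (0 < L%:R :> R)%R by rewrite ltr0n expn_gt0.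
pose c := (mr (mu k) S / L%:R)%R.
have c0 : (0 <= c)%R by rewrite divr_ge0 ?mr_ge0 // ltW.
have hLc : (L%:R * c <= mr (mu k) S)%R.
  by rewrite /c mulrC -mulrA mulVf ?mulr1 // gt_eqF.
have [Q [mQ QS hQ dQ]] := equal_parts (@hna k) (L := L) mS c0 hLc.
pose Qi (b : 'I_L) := Q b.
have hsL : (2 ^ size s <= L)%N by rewrite size_s.
have [Tt [pi [X [cT hX inj ef fr]]]] :=
  Gdiv hna (L := L) us (Q := Qi) (fun b => mQ b) hsL.
have : ~~ ([set: 'I_L]%SET \subset Tt).
  apply/negP => /subset_leq_card; rewrite cardsT card_ord => h.
  by move: (leq_ltn_trans h cT); rewrite size_s ltnn.
case/subsetPn => b0 _ b0T.
pose F i := if i == k then Qi b0 else X i.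
have mF i : measurable (F i).
  rewrite /F; case: eqP => [_|/eqP ik]; first exact: mQ.
  by case: (hX i); rewrite ?ins.
have FS i : F i `<=` S.
  rewrite /F; case: eqP => [_|/eqP ik]; first exact: QS.
  by case: (hX i); rewrite ?ins // => _ _ XQ x /XQ /QS.
have hQi b : mr (mu k) (Qi b) = c by apply: hQ; rewrite ltn_ord.
exists (\bigcup_(i in [set: 'I_r]) F i).
have mH : measurable (\bigcup_(i in [set: 'I_r]) F i).
  by apply: fin_bigcup_measurable; [exact: finite_finset | move=> i _].
split => //.
- by move=> x [i _ /FS].
- apply: (@le_trans _ _ (mu k (F k))).
    rewrite (muE _ mS) (muE _ (mF k)) -EFinM lee_fin /F eqxx hQi /c.
    rewrite /L natrX mulrC.
    by [].
  by apply: le_measure; rewrite ?inE //; move=> x Fx; exists k.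
- exists F; split => //.
  + move=> i j _ _ [x [xi xj]].
    apply/eqP/negPn/negP => ij.
    move: xi xj; rewrite /F.
    have [ik|ik] := eqVneq i k; have [jk|jk] := eqVneq j k.
    * by move: ij; rewrite ik jk eqxx.
    * case: (hX j); rewrite ?ins // => pjT _ XQ xb0 /XQ xpj.
      have hb : (nat_of_ord b0 != nat_of_ord (pi j)).
        by apply/negP => /eqP /val_inj e; move: b0T; rewrite e pjT.
      by have := dQ _ _ hb; rewrite -subset0 => /(_ x); apply.
    * case: (hX i); rewrite ?ins // => piT _ XQ /XQ xpi xb0.
      have hb : (nat_of_ord (pi i) != nat_of_ord b0).
        by apply/negP => /eqP /val_inj e; move: b0T; rewrite -e piT.
      by have := dQ _ _ hb; rewrite -subset0 => /(_ x); apply.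
    * case: (hX i); rewrite ?ins // => _ _ XQi.
      case: (hX j); rewrite ?ins // => _ _ XQj /XQi xpi /XQj xpj.
      have hb : (nat_of_ord (pi i) != nat_of_ord (pi j)).
        apply/negP => /eqP /val_inj e; move: ij.
        by rewrite (inj i j) ?ins ?eqxx.
      by have := dQ _ _ hb; rewrite -subset0 => /(_ x); apply.
  + move=> i j; rewrite (muE _ (mF i)) (muE _ (mF j)) lee_fin /F.
    have [hik|ik] := eqVneq i k; have [hjk|jk] := eqVneq j k.
    * by subst i j.
    * subst i; rewrite hQi -(hQi (pi j)).
      case: (hX j); rewrite ?ins // => _ mX XQ.
      exact: (mr_le (mu k) mX (mQ (pi j)) XQ).
    * by subst j; apply: fr; rewrite ?ins.
    * by apply: ef; rewrite ?ins.
Qed.
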